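(* Let $N\in\mathbb N$, let $\{\Omega_k\}_k\subset\mathscr A$ be $N$-admissible sets and let $M\le N$ be a positive integer. Then: (i) if $\Omega_1\subset\Omega_2$, then $h_M(\Omega_1)\ge h_M(\Omega_2)$; (ii) if (P.6) holds and $\mathfrak m(\Omega_k)\to0$, then $h_M(\Omega_k)\to+\infty$; (iii) if (P.4), (P.5), (P.6) hold and $\Omega_k\to\Omega$ in $L^1(X,\mathfrak m)$ for some $\Omega\in\mathscr A$ with $\mathfrak m(\Omega)\in(0,+\infty)$, then $h_M(\Omega)\le\liminf_k h_M(\Omega_k)$ (with the convention $h_M(\Omega)=+\infty$ if $\Omega$ is not $M$-admissible). If moreover (P.3) holds, $P(\Omega)<+\infty$ and $P(\Omega_k)\to P(\Omega)$, then $h_M(\Omega)=\lim_k h_M(\Omega_k)$.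
   Context: $(X,\mathscr A,\mathfrak m)$ is a non-negative $\sigma$-finite measure space; for $A,B\in\mathscr A$, ''$A\subset B$'' means $\mathfrak m(A\setminus B)=0$. $P\colon\mathscr A\to[0,+\infty]$ is a proper functional (the perimeter). Convergence of sets in $L^1(X,\mathfrak m)$ means $L^1$ convergence of characteristic functions. Properties: (P.3) $P(E\cap F)+P(E\cup F)\le P(E)+P(F)$ for all $E,F\in\mathscr A$. (P.4) if $\chi_{E_k}\to\chi_E$ in $L^1(X,\mathfrak m)$ then $P(E)\le\liminf_k P(E_k)$. (P.5) for every $c\ge0$, $\{\chi_E: E\in\mathscr A,\ P(E)\le c\}$ is compact in $L^1(X,\mathfrak m)$. (P.6) there is $f\colon(0,+\infty)\to(0,+\infty)$ with $\lim_{\varepsilon\to0^+}f(\varepsilon)=+\infty$ such that $\mathfrak m(E)\le\varepsilon$ implies $P(E)\ge f(\varepsilon)\mathfrak m(E)$. An $N$-cluster is a family $\{\mathcal E(i)\}_{i=1}^N\subset\mathscr A$ with $0<\mathfrak m(\mathcal E(i))<+\infty$, $P(\mathcal E(i))<+\infty$, $\mathfrak m(\mathcal E(i)\cap\mathcal E(j))=0$ for $i\neq j$. $\Omega$ is $N$-admissible if it contains an $N$-cluster (then it is $M$-admissible for $M\le N$). $h_M(\Omega)=\inf\{\sum_{i=1}^M P(\mathcal E(i))/\mathfrak m(\mathcal E(i)):\mathcal E \text{ an } M\text{-cluster in }\Omega\}$. *)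

(* Defs.v *)
From HB Require Import structures.
From mathcomp Require Import all_boot all_order all_algebra.
From mathcomp Require Import all_classical all_reals all_analysis.
Set Implicit Arguments. Unset Strict Implicit. Unset Printing Implicit Defensive.
Import Order.TTheory GRing.Theory Num.Theory.
Local Open Scope classical_set_scope.
Local Open Scope ring_scope.

Section Cheeger.
Context {d : measure_display} {T : measurableType d} {R : realType}.
Variables (mu : {measure set T -> \bar R}) (P : set T -> \bar R).

Definition subset_ae (A B : set T) : Prop := mu (A `\` B) = 0%E.

Definition L1_conv (E : nat -> set T) (F : set T) : Prop :=
  (fun k => \int[mu]_x `| ((\1_(E k) x : R) - (\1_F x : R))%:E |)%E @ \oo --> 0%E.

Definition proper_functional : Prop :=
  (forall E, measurable E -> (0 <= P E)%E) /\
  (exists E, measurable E /\ (P E < +oo)%E).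

Definition P3 : Prop := forall E F, measurable E -> measurable F ->
  (P (E `&` F) + P (E `|` F) <= P E + P F)%E.

Definition P4 : Prop := forall (E : nat -> set T) (F : set T),
  (forall k, measurable (E k)) -> measurable F -> L1_conv E F ->
  (P F <= limn_einf (fun k => P (E k)))%E.

(* compactness in L^1 of {chi_E : P(E) <= c}, read as sequential compactness *)
Definition P5 : Prop := forall (c : R), 0 <= c ->
  forall E : nat -> set T, (forall k, measurable (E k)) ->
    (forall k, (P (E k) <= c%:E)%E) ->
  exists (phi : nat -> nat) (F : set T),
    {homo phi : n m / (n < m)%N} /\ measurable F /\ (P F <= c%:E)%E /\
    L1_conv (fun k => E (phi k)) F.

Definition P6 : Prop := exists f : R -> R,
  (forall e, 0 < e -> 0 < f e) /\
  (f x @[x --> 0^'+] --> +oo) /\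
  (forall (E : set T) (e : R), measurable E -> 0 < e -> (mu E <= e%:E)%E ->
     ((f e)%:E * mu E <= P E)%E).

Definition is_cluster (N : nat) (E : 'I_N -> set T) : Prop :=
  (forall i, measurable (E i) /\ (0 < mu (E i))%E /\ (mu (E i) < +oo)%E /\
             (P (E i) < +oo)%E) /\
  (forall i j, i != j -> mu (E i `&` E j) = 0%E).

Definition cluster_in (N : nat) (E : 'I_N -> set T) (Om : set T) : Prop :=
  is_cluster E /\ (forall i, subset_ae (E i) Om).

Definition admissible (N : nat) (Om : set T) : Prop :=
  exists E : 'I_N -> set T, cluster_in E Om.

(* h_M(Om); equals +oo (inf of the empty set) when Om is not M-admissible *)
Definition cheeger (M : nat) (Om : set T) : \bar R :=
  ereal_inf [set (\sum_(i < M) fine (P (E i)) / fine (mu (E i)))%:E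
            | E in [set E : 'I_M -> set T | cluster_in E Om]].

End Cheeger.

(* Main.v *)
Require Import Defs.
From HB Require Import structures.
From mathcomp Require Import all_boot all_order all_algebra.
From mathcomp Require Import all_classical all_reals all_analysis.
From mathcomp Require Import lra.
Import Order.TTheory GRing.Theory Num.Theory.
Local Open Scope classical_set_scope.
Local Open Scope ring_scope.

Set Implicit Arguments. Unset Strict Implicit. Unset Printing Implicit Defensive.

Definition ev (Q : nat -> Prop) := exists N, forall n, (N <= n)%N -> Q n.

Lemma near_ev (Q : nat -> Prop) : (\forall n \near \oo, Q n) <-> ev Q.
Proof. split; [move=> [N _ H]; exists N; exact: H|move=> [N H]; exists N => //]. Qed.

Lemma ev_and (Q1 Q2 : nat -> Prop) : ev Q1 -> ev Q2 -> ev (fun n => Q1 n /\ Q2 n).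
Proof.
move=> [N1 H1] [N2 H2]; exists (maxn N1 N2) => n Hn; split.
by apply: H1; rewrite (leq_trans (leq_maxl _ _) Hn).
by apply: H2; rewrite (leq_trans (leq_maxr _ _) Hn).
Qed.

Lemma ev_imp (Q1 Q2 : nat -> Prop) : (forall n, Q1 n -> Q2 n) -> ev Q1 -> ev Q2.
Proof. by move=> H [N HN]; exists N => n /HN/H. Qed.

Lemma ev_comp (Q : nat -> Prop) (g : nat -> nat) : (forall n, (n <= g n)%N) ->
  ev Q -> ev (fun n => Q (g n)).
Proof. by move=> Hg [N HN]; exists N => n Hn; apply: HN; rewrite (leq_trans Hn). Qed.

Lemma ev_fin (I : finType) (Q : I -> nat -> Prop) : (forall i, ev (Q i)) ->
  ev (fun n => forall i, Q i n).
Proof.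
move=> H; apply/near_ev; apply: filter_forall => i; exact/near_ev.
Qed.

Lemma ev_ex (Q : nat -> Prop) : ev Q -> exists n, Q n.
Proof. by move=> [N HN]; exists N; exact: HN. Qed.

Section ecvg.
Context {R : realType}.
Local Open Scope ereal_scope.

Lemma ecvgP (u : nat -> \bar R) (l : R) :
  u @ \oo --> l%:E <->
  (forall e : R, (0 < e)%R -> ev (fun n => (l - e)%:E <= u n /\ u n <= (l + e)%:E)).
Proof.
split.
- move=> /fine_cvgP [Hf Hc] e e0.
  have Hf' := proj1 (near_ev _) Hf.
  move/cvgrPdist_le: Hc => Hc.
  have Hd := proj1 (near_ev _) (Hc e e0).
  apply: (ev_imp _ (ev_and Hf' Hd)) => n [fn dn].
  idtac.
  rewrite -(fineK fn) !lee_fin.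
  by move: dn; rewrite /= ler_distlC => /andP[].
- move=> H; apply/fine_cvgP; split.
  + apply/near_ev; apply: ev_imp (H 1%R ltr01) => n [h1 h2].
    by rewrite fin_numElt (lt_le_trans _ h1) ?ltNyr // (le_lt_trans h2) ?ltry.
  + apply/cvgrPdist_le => e e0; apply/near_ev; apply: ev_imp (H e e0) => n [h1 h2].
    have fn : u n \is a fin_num.
      by rewrite fin_numElt (lt_le_trans _ h1) ?ltNyr // (le_lt_trans h2) ?ltry.
    move: h1 h2; rewrite -(fineK fn) !lee_fin /= => h1 h2.
    by rewrite ler_distlC h1 h2.
Qed.
End ecvg.

Section ecvg2.
Context {R : realType}.
Local Open Scope ereal_scope.

Lemma ecvg0P (u : nat -> \bar R) : (forall n, 0 <= u n) ->
  u @ \oo --> 0%E <-> (forall e : R, (0 < e)%R -> ev (fun n => u n <= e%:E)).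
Proof.
move=> u0; split.
- move/ecvgP => H e e0; apply: ev_imp (H e e0) => n [_]; by rewrite add0r.
- move=> H; apply/ecvgP => e e0; apply: ev_imp (H e e0) => n h; split.
    by rewrite (le_trans _ (u0 n)) // lee_fin; lra.
  by rewrite add0r.
Qed.

Lemma ecvgyP (u : nat -> \bar R) :
  u @ \oo --> +oo <-> (forall A : R, ev (fun n => A%:E <= u n)).
Proof.
split.
- by move/cvgeyPge => H A; apply/near_ev; exact: H.
- by move=> H; apply/cvgeyPge => A; apply/near_ev; exact: H.
Qed.
End ecvg2.

Section meas.
Context {d : measure_display} {T : measurableType d} {R : realType}.
Variable (mu : {measure set T -> \bar R}).
Local Open Scope ereal_scope.

Lemma msub (A B : set T) : measurable A -> measurable B -> A `<=` B -> mu A <= mu B.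
Proof. by move=> mA mB AB; apply: le_measure => //; rewrite inE. Qed.

Lemma msub3 (A B C : set T) : measurable A -> measurable B -> measurable C ->
  A `<=` B `|` C -> mu A <= mu B + mu C.
Proof.
move=> mA mB mC H; apply: le_trans (measureU2 mu mB mC).
by apply: msub => //; exact: measurableU.
Qed.

Definition sd (A B : set T) := (A `\` B) `|` (B `\` A).

Lemma sd_meas A B : measurable A -> measurable B -> measurable (sd A B).
Proof. by move=> mA mB; apply: measurableU; apply: measurableD. Qed.

Lemma int_sd (A B : set T) : measurable A -> measurable B ->
  \int[mu]_x `| ((\1_A x : R) - (\1_B x : R))%:E | = mu (sd A B).
Proof.
move=> mA mB.
have -> : (fun x => `| ((\1_A x : R) - (\1_B x : R))%:E |) =
          (fun x => (\1_(sd A B) x : R)%:E).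
  apply/funext => x; rewrite abse_EFin /indic /=; congr (_%:E).
  have [xA|xA] := pselect (A x); have [xB|xB] := pselect (B x).
  - rewrite (mem_set xA) (mem_set xB) memNset ?subrr ?normr0 //.
    by rewrite /sd => -[[]|[]].
  - rewrite (mem_set xA) (memNset xB) mem_set ?subr0 ?normr1 //.
    by left.
  - rewrite (memNset xA) (mem_set xB) mem_set ?sub0r ?normrN ?normr1 //.
    by right.
  - rewrite (memNset xA) (memNset xB) memNset ?subrr ?normr0 //.
    by rewrite /sd => -[[]|[]].
rewrite integral_indic ?setIT //; exact: sd_meas.
Qed.

Lemma L1P (E : nat -> set T) (F : set T) : (forall k, measurable (E k)) ->
  measurable F ->
  L1_conv mu E F <-> (forall e : R, (0 < e)%R -> ev (fun k => mu (sd (E k) F) <= e%:E)).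
Proof.
move=> mE mF; rewrite /L1_conv.
have -> : (fun k => \int[mu]_x `| ((\1_(E k) x : R) - (\1_F x : R))%:E |) =
          (fun k => mu (sd (E k) F)).
  by apply/funext => k; rewrite int_sd.
apply: ecvg0P => n; exact: measure_ge0.
Qed.

Lemma sd_l A B : A `\` B `<=` sd A B. Proof. by move=> x h; left. Qed.
Lemma sd_r A B : B `\` A `<=` sd A B. Proof. by move=> x h; right. Qed.

Lemma L1_l (E : nat -> set T) (F : set T) : (forall k, measurable (E k)) ->
  measurable F -> L1_conv mu E F ->
  forall e : R, (0 < e)%R -> ev (fun k => mu (E k `\` F) <= e%:E).
Proof.
move=> mE mF /(L1P mE mF) H e e0; apply: ev_imp (H e e0) => n h.
apply: le_trans h; apply: msub; [apply: measurableD|apply: sd_meas|apply: sd_l] => //.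
Qed.

Lemma L1_r (E : nat -> set T) (F : set T) : (forall k, measurable (E k)) ->
  measurable F -> L1_conv mu E F ->
  forall e : R, (0 < e)%R -> ev (fun k => mu (F `\` E k) <= e%:E).
Proof.
move=> mE mF /(L1P mE mF) H e e0; apply: ev_imp (H e e0) => n h.
apply: le_trans h; apply: msub; [apply: measurableD|apply: sd_meas|apply: sd_r] => //.
Qed.

End meas.

Section liminf.
Context {R : realType}.
Local Open Scope ereal_scope.

Lemma einf_sup (u : nat -> \bar R) : limn_einf u = ereal_sup (range (einfs u)).
Proof. by rewrite limn_einf_lim; apply: cvg_lim => //; exact: cvg_einfs_sup. Qed.

Lemma LI1 (u : nat -> \bar R) x : x < limn_einf u -> ev (fun k => x < u k).
Proof.
rewrite einf_sup => /ereal_sup_gt [_ [n _ <-]] h; exists n => k nk.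
apply: lt_le_trans h _; apply: ereal_inf_lbound; by exists k.
Qed.

Lemma LI2 (u : nat -> \bar R) x : limn_einf u < x ->
  forall n, exists k, (n <= k)%N /\ u k < x.
Proof.
rewrite einf_sup => h n.
have : einfs u n < x.
  by apply: le_lt_trans h; apply: ereal_sup_ubound; exists n.
by move=> /ereal_inf_lt [_ [k /= nk <-]] h2; exists k.
Qed.

Lemma le_from_lt (x y : \bar R) : (forall L : R, y < L%:E -> x <= L%:E) -> x <= y.
Proof.
move=> H; case: y H => [r| |] H.
- apply/lee_addgt0Pr => e e0; apply: H; rewrite lte_fin; lra.
- exact: leey.
- case: x H => [r| |] H.
  + have := H (r - 1)%R (ltNyr _); rewrite lee_fin => h; exfalso; move: h.
    rewrite lerBrDl; lra.
  + by have := H 0%R (ltNyr _).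
  + done.
Qed.

End liminf.

Lemma homo_ge (phi : nat -> nat) : {homo phi : n m / (n < m)%N} -> forall n, (n <= phi n)%N.
Proof.
move=> h; elim=> [//|n IH]; apply: leq_ltn_trans IH (h _ _ _); done.
Qed.

Section extract.
Context {d : measure_display} {T : measurableType d} {R : realType}.
Variables (mu : {measure set T -> \bar R}) (P : set T -> \bar R).
Local Open Scope ereal_scope.

Lemma L1_sub (E : nat -> set T) F (phi : nat -> nat) : (forall k, measurable (E k)) ->
  measurable F -> {homo phi : n m / (n < m)%N} -> L1_conv mu E F ->
  L1_conv mu (fun k => E (phi k)) F.
Proof.
move=> mE mF hphi /(L1P mu mE mF) H; apply/(L1P mu (fun k => mE (phi k)) mF) => e e0.
exact: ev_comp (homo_ge hphi) (H e e0).
Qed.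

Lemma extract (M : nat) (E : 'I_M -> nat -> set T) (c : R) : P5 mu P -> (0 <= c)%R ->
  (forall i k, measurable (E i k)) -> (forall i k, P (E i k) <= c%:E) ->
  exists (phi : nat -> nat) (F : 'I_M -> set T), {homo phi : n m / (n < m)%N} /\
    (forall i, measurable (F i) /\ P (F i) <= c%:E /\
       L1_conv mu (fun k => E i (phi k)) (F i)).
Proof.
move=> H5 c0; elim: M E => [|M IH] E mE PE.
  by exists id, (fun _ => set0); split => // -[].
have [phi [F' [hphi HF']]] := IH (fun i => E (lift ord0 i)) (fun i => mE _) (fun i => PE _).
have [psi [F0 [hpsi [mF0 [PF0 LF0]]]]] :=
  H5 c c0 (fun k => E ord0 (phi k)) (fun k => mE _ _) (fun k => PE _ _).
exists (fun k => phi (psi k)),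
  (fun i => match unlift ord0 i with Some j => F' j | None => F0 end).
split; first by move=> n m nm; apply: hphi; apply: hpsi.
move=> i; case: (unliftP ord0 i) => [j ->|->].
- have [mF [PF LF]] := HF' j; split => //; split => //.
  exact: (L1_sub (fun k => mE _ _) mF hpsi LF).
- done.
Qed.
End extract.

Section rat.
Context {R : realType}.

Lemma RatUp (q m eta : R) : 0 <= q -> 0 < m -> 0 < eta ->
  exists dl, 0 < dl /\ dl < m /\
    forall p' m', p' <= q * m + dl -> m - dl <= m' -> p' / m' <= q + eta.
Proof.
move=> q0 m0 e0.
have h1 : 0 < 1 + q + eta by lra.
exists (eta * m / (1 + q + eta)).
have hd : eta * m / (1 + q + eta) * (1 + q + eta) = eta * m.
  by rewrite divfK // gt_eqF.
set dl := eta * m / (1 + q + eta) in hd *.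
have dl0 : 0 < dl by rewrite /dl divr_gt0 // mulr_gt0.
split => //; split; first nra.
move=> p' m' hp hm.
have m'0 : 0 < m' by nra.
rewrite ler_pdivrMr //; nra.
Qed.

Lemma RatLo (q m eta : R) : 0 <= q -> 0 < m -> 0 < eta ->
  exists dl, 0 < dl /\
    forall p' m', 0 <= p' -> q * m - dl <= p' -> 0 < m' -> m' <= m + dl ->
      q <= p' / m' + eta.
Proof.
move=> q0 m0 e0.
have h1 : 0 < 1 + q by lra.
exists (eta * m / (1 + q)).
have hd : eta * m / (1 + q) * (1 + q) = eta * m.
  by rewrite divfK // gt_eqF.
set dl := eta * m / (1 + q) in hd *.
have dl0 : 0 < dl by rewrite /dl divr_gt0 // mulr_gt0.
split => //.
move=> p' m' hp0 hp hm0 hm.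
rewrite -lerBlDr ler_pdivlMr //.
have [qe|qe] := lerP q eta; first nra.
nra.
Qed.
End rat.

Section main.
Context {d : measure_display} {T : measurableType d} {R : realType}.
Variables (mu : {measure set T -> \bar R}) (P : set T -> \bar R).
Hypothesis P0 : forall E, measurable E -> (0 <= P E)%E.
Local Open Scope ereal_scope.

Definition cval M (E : 'I_M -> set T) : R :=
  (\sum_(i < M) fine (P (E i)) / fine (mu (E i)))%R.

Lemma cl_facts N (E : 'I_N -> set T) Om i : cluster_in mu P E Om ->
  [/\ measurable (E i), (fine (mu (E i)))%:E = mu (E i), (0 < fine (mu (E i)))%R,
      (fine (P (E i)))%:E = P (E i) & (0 <= fine (P (E i)))%R].
Proof.
move=> [[H _] _]; have [mE [m0 [mfin Pfin]]] := H i.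
have mfn : mu (E i) \is a fin_num by rewrite ge0_fin_numE // measure_ge0.
have Pfn : P (E i) \is a fin_num by rewrite ge0_fin_numE // P0.
split => //; first exact: fineK.
- by rewrite -lte_fin fineK.
- exact: fineK.
- by rewrite -lee_fin fineK // P0.
Qed.

Lemma ratio_ge0 N (E : 'I_N -> set T) Om i : cluster_in mu P E Om ->
  (0 <= fine (P (E i)) / fine (mu (E i)))%R.
Proof. move=> HE; have [_ _ m0 _ p0] := cl_facts i HE; exact: divr_ge0 (ltW m0). Qed.

Lemma val_ge0 N (E : 'I_N -> set T) Om : cluster_in mu P E Om -> (0 <= cval E)%R.
Proof. move=> HE; apply: sumr_ge0 => i _; exact: ratio_ge0 HE. Qed.

Lemma ratio_le_val N (E : 'I_N -> set T) Om i : cluster_in mu P E Om ->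
  (fine (P (E i)) / fine (mu (E i)) <= cval E)%R.
Proof.
move=> HE; rewrite /cval (bigD1 i) //= lerDl; apply: sumr_ge0 => j _.
exact: ratio_ge0 HE.
Qed.

Lemma cheeger_le M (E : 'I_M -> set T) Om : cluster_in mu P E Om ->
  cheeger mu P M Om <= (cval E)%:E.
Proof. by move=> HE; apply: ereal_inf_lbound; exists E. Qed.

Lemma cheeger_lt M Om x : cheeger mu P M Om < x ->
  exists E : 'I_M -> set T, cluster_in mu P E Om /\ (cval E)%:E < x.
Proof. by move=> /ereal_inf_lt [_ [E HE <-] h]; exists E. Qed.

Lemma cheeger_ge0 M Om : 0 <= cheeger mu P M Om.
Proof. by apply/ereal_infP => _ [E HE <-]; rewrite lee_fin; exact: val_ge0 HE. Qed.

Lemma split_sub (A B : set T) : A `<=` (A `\` B) `|` B.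
Proof. by move=> x Ax; have [|] := pselect (B x); [right|left]. Qed.

Lemma part1 M A B : measurable A -> measurable B -> subset_ae mu A B ->
  cheeger mu P M B <= cheeger mu P M A.
Proof.
move=> mA mB hAB; apply: le_ereal_inf => _ [E [HE1 HE2] <-]; exists E => //.
split => // i; have mE := proj1 (HE1.1 i).
rewrite /subset_ae; apply/eqP; rewrite eq_le measure_ge0 andbT.
have := HE2 i; rewrite /subset_ae => h.
have : mu (E i `\` B) <= mu (E i `\` A) + mu (A `\` B).
  apply: msub3; try apply: measurableD => //.
  move=> x [Ex nBx]; have [Ax|nAx] := pselect (A x); [right|left] => //.
by rewrite h hAB adde0.
Qed.

Lemma part2 M (Om : nat -> set T) : (forall k, measurable (Om k)) -> (0 < M)%N ->
  P6 mu P -> (fun k => mu (Om k)) @ \oo --> 0 ->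
  (fun k => cheeger mu P M (Om k)) @ \oo --> +oo.
Proof.
move=> mOm M0 [f [fpos [flim fP]]] hmu; apply/ecvgyP => A.
move/cvgryPge: flim => /(_ A) [e /= e0 He].
have e20 : (0 < e / 2)%R by rewrite divr_gt0.
have fA : (A <= f (e / 2))%R.
  apply: He => //=; rewrite /ball /= sub0r normrN ger0_norm; [lra|lra].
have hev := proj1 (@ecvg0P _ (fun k => mu (Om k)) (fun n => measure_ge0 mu (Om n))) hmu _ e20.
apply: ev_imp hev => k hk; apply/ereal_infP => _ [E HE <-].
set i0 := Ordinal M0; have [mE mEe m0 PEe p0] := cl_facts i0 HE.
have hmu_le : mu (E i0) <= (e / 2)%:E.
  apply: le_trans hk.
  have : mu (E i0) <= mu (E i0 `\` Om k) + mu (Om k).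
    by apply: msub3 => //; [exact: measurableD|exact: split_sub].
  by rewrite (proj2 HE i0) add0e.
have := fP _ _ mE e20 hmu_le; rewrite -mEe -PEe -EFinM lee_fin => h.
rewrite lee_fin; apply: le_trans fA _; apply: le_trans (ratio_le_val i0 HE).
by rewrite ler_pdivlMr.
Qed.

End main.

Lemma build_seq (Q : nat -> Prop) K0 : (forall n, exists k, (n <= k)%N /\ Q k) ->
  exists psi : nat -> nat, {homo psi : n m / (n < m)%N} /\
    forall j, (K0 <= psi j)%N /\ Q (psi j).
Proof.
move=> H; have [g Hg] := boolp.choice H.
pose psi := fix psi j := if j is j'.+1 then g (psi j').+1 else g K0.
exists psi; split.
- apply: (homo_ltn ltn_trans) => n /=; exact: (Hg (psi n).+1).1.
- elim=> [|j [IH1 IH2]] /=; first exact: Hg K0.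
  split; last exact: (Hg _).2.
  apply: leq_trans (Hg _).1; by rewrite (leq_trans IH1).
Qed.

Section ehelp.
Context {R : realType}.
Local Open Scope ereal_scope.

Lemma ezero (x : \bar R) : 0 <= x -> (forall e : R, (0 < e)%R -> x <= e%:E) -> x = 0.
Proof.
move=> x0 H; apply/eqP; rewrite eq_le x0 andbT.
case: x x0 H => [r| |] x0 H.
- rewrite lee_fin; apply/ler_addgt0Pr => e e0; rewrite add0r -lee_fin; exact: H.
- by have := H 1%R ltr01.
- done.
Qed.

Lemma elemA (a x y : \bar R) (r s : R) : 0 <= x -> a <= x + y -> x <= r%:E ->
  s%:E < a -> (s - r)%:E < y.
Proof.
move=> x0 h1 h2 h3.
case: x x0 h1 h2 => [x'| |] // x0 h1 h2.
case: y h1 => [y'| |] h1.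
- move: (lt_le_trans h3 h1); rewrite -EFinD !lte_fin; move: h2; rewrite lee_fin; lra.
- exact: ltry.
- by move: (lt_le_trans h3 h1).
Qed.
End ehelp.

Section main6.
Context {d : measure_display} {T : measurableType d} {R : realType}.
Variables (mu : {measure set T -> \bar R}) (P : set T -> \bar R).
Hypothesis P0 : forall E, measurable E -> (0 <= P E)%E.
Local Open Scope ereal_scope.

Lemma msub4 (A B C D : set T) : measurable A -> measurable B -> measurable C ->
  measurable D -> A `<=` B `|` C `|` D -> mu A <= mu B + mu C + mu D.
Proof.
move=> mA mB mC mD H.
have h := msub3 mu mA (measurableU _ _ mB mC) mD H.
apply: le_trans h _.
by rewrite leeD // measureU2.
Qed.

Lemma part3a M (Om : nat -> set T) Omega : (forall k, measurable (Om k)) -> (0 < M)%N ->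
  P4 mu P -> P5 mu P -> P6 mu P -> measurable Omega -> 0 < mu Omega -> mu Omega < +oo ->
  L1_conv mu Om Omega ->
  cheeger mu P M Omega <= limn_einf (fun k => cheeger mu P M (Om k)).
Proof.
move=> mOm M0 H4 H5 [f [fpos [flim fP]]] mO muO0 muOoo hL1.
apply: le_from_lt => L hL.
set mOv := fine (mu Omega).
have mOe : mOv%:E = mu Omega by rewrite fineK // ge0_fin_numE // measure_ge0.
have mO0 : (0 <= mOv)%R by rewrite -lee_fin mOe measure_ge0.
have [K0 HK0] := L1_l mOm mO hL1 ltr01.
have HOm k : (K0 <= k)%N -> mu (Om k) <= (mOv + 1)%:E.
  move=> /HK0 h.
  have ss : Om k `<=` (Om k `\` Omega) `|` Omega by exact: split_sub.
  have h2 := msub3 mu (mOm k) (measurableD (mOm k) mO) mO ss.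
  apply: le_trans h2 _.
  by rewrite EFinD mOe addeC leeD.
move/cvgryPge: flim => /(_ L) [e /= e0 He].
have es0 : (0 < e / 2)%R by rewrite divr_gt0.
have fL : (L <= f (e / 2))%R.
  by apply: He => //=; rewrite /ball /= sub0r normrN ger0_norm; lra.
set es := (e / 2)%R in es0 fL.
have [psi [hpsi Hpsi]] := build_seq K0 (LI2 hL).
have [E HE] := boolp.choice (fun j => cheeger_lt (Hpsi j).2).
have Lpos : (0 < L)%R.
  have [HE1 HE2] := HE 0%N; rewrite -lte_fin; apply: le_lt_trans HE2.
  rewrite lee_fin; exact: (@val_ge0 d T R mu P P0 M (E 0%N) _ HE1).
have mE j i : measurable (E j i) by have [[H _] _] := (HE j).1; exact: (H i).1.
have Hji j i : [/\ (fine (P (E j i)) / fine (mu (E j i)) < L)%R,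
    mu (E j i) <= (mOv + 1)%:E & es%:E < mu (E j i)].
  have [HE1 HE2] := HE j; have [_ mEe m0 PEe p0] := cl_facts P0 i HE1.
  have hr : (fine (P (E j i)) / fine (mu (E j i)) < L)%R.
    by apply: le_lt_trans (ratio_le_val P0 i HE1) _; rewrite -lte_fin.
  have hmu : mu (E j i) <= (mOv + 1)%:E.
    apply: le_trans (HOm _ (Hpsi j).1).
    have ss : E j i `<=` (E j i `\` Om (psi j)) `|` Om (psi j) by exact: split_sub.
    have := msub3 mu (mE j i) (measurableD (mE j i) (mOm (psi j))) (mOm (psi j)) ss.
    by rewrite (proj2 HE1 i) add0e.
  split => //.
  rewrite ltNge; apply/negP => hle.
  have := fP _ _ (mE j i) es0 hle; rewrite -mEe -PEe -EFinM lee_fin => h.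
  have h2 : (f es <= fine (P (E j i)) / fine (mu (E j i)))%R by rewrite ler_pdivlMr.
  by have := le_lt_trans (le_trans fL h2) hr; rewrite ltxx.
set c := (L * (mOv + 1))%R.
have c0 : (0 <= c)%R by rewrite mulr_ge0 // ?ltW //; lra.
have HP j i : P (E j i) <= c%:E.
  have [HE1 _] := HE j; have [_ mEe m0 PEe p0] := cl_facts P0 i HE1.
  have [hr hmu _] := Hji j i.
  rewrite -PEe lee_fin.
  have hm : (fine (mu (E j i)) <= mOv + 1)%R by rewrite -lee_fin mEe.
  have h : (fine (P (E j i)) <= L * fine (mu (E j i)))%R by rewrite -ler_pdivrMr // ltW.
  apply: le_trans h _; rewrite /c; apply: ler_wpM2l => //; exact: ltW.
have [phi [F [hphi HF]]] := extract (E := fun i j => E j i) H5 c0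
  (fun i k => mE k i) (fun i k => HP k i).
have hw : {homo (fun k => psi (phi k)) : n m / (n < m)%N}.
  by move=> n m nm; apply: hpsi; apply: hphi.
have hL1w : L1_conv mu (fun k => Om (psi (phi k))) Omega.
  exact: L1_sub (fun k => mOm _) mO hw hL1.
have mF i : measurable (F i) by have [] := HF i.
have LF i : L1_conv mu (fun k => E (phi k) i) (F i) by have [_ []] := HF i.
have PF i : P (F i) <= c%:E by have [_ []] := HF i.
have Fsub i : subset_ae mu (F i) Omega.
  apply: ezero => [|e' e'0]; first exact: measure_ge0.
  have e20 : (0 < e' / 2)%R by rewrite divr_gt0.
  have h1 := L1_r (fun k => mE _ _) (mF i) (LF i) e20.
  have h2 := L1_l (fun k => mOm _) mO hL1w e20.
  have [k [hk1 hk2]] := ev_ex (ev_and h1 h2).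
  have [HE1 _] := HE (phi k).
  have ss : F i `\` Omega `<=` (F i `\` E (phi k) i) `|` (E (phi k) i `\` Om (psi (phi k)))
     `|` (Om (psi (phi k)) `\` Omega).
    move=> x [Fx nOx]; have [Gx|nGx] := pselect (E (phi k) i x); last by left; left.
    have [Ox|nOx'] := pselect (Om (psi (phi k)) x); last by left; right.
    by right.
  have := msub4 (measurableD (mF i) mO) (measurableD (mF i) (mE _ _))
    (measurableD (mE _ _) (mOm _)) (measurableD (mOm _) mO) ss.
  rewrite (proj2 HE1 i) adde0 => h; apply: (le_trans h); apply: le_trans (leeD hk1 hk2) _.
  by rewrite -EFinD lee_fin; lra.
have Fpos i : 0 < mu (F i).
  have es20 : (0 < es / 2)%R by rewrite divr_gt0.
  have [k hk] := ev_ex (L1_l (fun k => mE _ _) (mF i) (LF i) es20).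
  have [_ _ hgt] := Hji (phi k) i.
  have ss : E (phi k) i `<=` (E (phi k) i `\` F i) `|` F i by exact: split_sub.
  have h := msub3 mu (mE _ _) (measurableD (mE _ _) (mF i)) (mF i) ss.
  have := elemA (measure_ge0 _ _) h hk hgt.
  apply: le_lt_trans; rewrite lee_fin; lra.
have Ffin i : mu (F i) < +oo.
  have [k hk] := ev_ex (L1_r (fun k => mE _ _) (mF i) (LF i) ltr01).
  have [_ hmu _] := Hji (phi k) i.
  have ss : F i `<=` (F i `\` E (phi k) i) `|` E (phi k) i by exact: split_sub.
  have h := msub3 mu (mF i) (measurableD (mF i) (mE _ _)) (mE _ _) ss.
  apply: le_lt_trans h _; apply: le_lt_trans (leeD hk hmu) _.
  by rewrite -EFinD ltry.
have Fdisj i j : i != j -> mu (F i `&` F j) = 0.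
  move=> ij; apply: ezero => [|e' e'0]; first exact: measure_ge0.
  have e20 : (0 < e' / 2)%R by rewrite divr_gt0.
  have h1 := L1_r (fun k => mE _ _) (mF i) (LF i) e20.
  have h2 := L1_r (fun k => mE _ _) (mF j) (LF j) e20.
  have [k [hk1 hk2]] := ev_ex (ev_and h1 h2).
  have [[_ HE1] _] := (HE (phi k)).1.
  have ss : F i `&` F j `<=` (F i `\` E (phi k) i) `|` (F j `\` E (phi k) j)
     `|` (E (phi k) i `&` E (phi k) j).
    move=> x [Fx Fx']; have [Gx|nGx] := pselect (E (phi k) i x); last by left; left.
    have [Gx'|nGx'] := pselect (E (phi k) j x); last by left; right.
    by right.
  have := msub4 (measurableI _ _ (mF i) (mF j)) (measurableD (mF i) (mE _ _))
    (measurableD (mF j) (mE _ _)) (measurableI _ _ (mE _ _) (mE _ _)) ss.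
  rewrite (HE1 i j ij) adde0 => h; apply: (le_trans h); apply: le_trans (leeD hk1 hk2) _.
  by rewrite -EFinD lee_fin; lra.
have HFc : cluster_in mu P F Omega.
  split => //; split => // i; split => //; split => //; split => //.
  exact: le_lt_trans (PF i) (ltry _).
apply: le_trans (cheeger_le HFc) _; rewrite lee_fin.
apply/ler_addgt0Pr => eta eta0.
have M0' : (0 < M%:R :> R)%R by rewrite ltr0n.
have eta'0 : (0 < eta / M%:R)%R by rewrite divr_gt0.
have [dl Hdl] := boolp.choice (fun i : 'I_M =>
  RatLo (ratio_ge0 P0 i HFc) (let: And5 _ _ m0 _ _ := cl_facts P0 i HFc in m0) eta'0).
have Hev i : ev (fun k =>
   ((fine (P (F i)) - dl i)%:E < P (E (phi k) i)) /\
   (mu (E (phi k) i) <= (fine (mu (F i)) + dl i)%:E)).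
  have [_ mFe m0 PFe p0] := cl_facts P0 i HFc.
  have dl0 := (Hdl i).1.
  apply: ev_and.
  - apply: LI1; apply: lt_le_trans (H4 _ _ (fun k => mE _ _) (mF i) (LF i)).
    by rewrite -PFe lte_fin; lra.
  - apply: ev_imp (L1_l (fun k => mE _ _) (mF i) (LF i) dl0) => k hk.
    have ss : E (phi k) i `<=` (E (phi k) i `\` F i) `|` F i by exact: split_sub.
    have h := msub3 mu (mE _ _) (measurableD (mE _ _) (mF i)) (mF i) ss.
    apply: le_trans h _; rewrite EFinD mFe addeC; exact: leeD.
have [k Hk] := ev_ex (ev_fin Hev).
have [HEk HEkL] := HE (phi k).
have hi i : (fine (P (F i)) / fine (mu (F i)) <=
    fine (P (E (phi k) i)) / fine (mu (E (phi k) i)) + eta / M%:R)%R.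
  have [_ mFe m0 PFe p0] := cl_facts P0 i HFc.
  have [_ mGe g0 PGe q0] := cl_facts P0 i HEk.
  have [h1 h2] := Hk i.
  apply: (Hdl i).2 => //.
  - rewrite divfK ?gt_eqF //; apply: ltW; by rewrite -lte_fin PGe.
  - by rewrite -lee_fin mGe.
apply: le_trans (ler_sum _ (fun i _ => hi i)) _.
rewrite big_split /= sumr_const card_ord -[X in (_ + X)%R]mulr_natr divfK ?gt_eqF //.
rewrite lerD2r; apply: ltW; by rewrite -lte_fin.
Qed.
End main6.

Section ehelp7.
Context {R : realType}.
Local Open Scope ereal_scope.

Lemma limn_einf_cst (x : \bar R) : limn_einf (fun _ : nat => x) = x.
Proof. exact: (cvg_limn_einf_sup (cvg_cst x)).1. Qed.

Lemma elemB (a b d : \bar R) (c r s : R) : 0 <= a -> 0 <= b -> a + b <= c%:E + d ->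
  d <= r%:E -> s%:E < b -> a <= (c + r - s)%:E.
Proof.
move=> a0 b0 h1 h2 h3.
have h4 : a + b <= (c + r)%:E by apply: le_trans h1 _; rewrite EFinD leeD.
clear h1.
case: a a0 h4 => [a'| |] // a0 h4.
- case: b b0 h3 h4 => [b'| |] // b0 h3 h4.
  move: h3 h4; rewrite -EFinD !lte_fin !lee_fin; lra.
- case: b b0 h3 h4 => [b'| |] // b0 h3 h4.
Qed.

Lemma elemC (a y z : \bar R) (r s : R) : 0 <= z -> a <= y + z -> z <= r%:E ->
  s%:E <= a -> (s - r)%:E <= y.
Proof.
move=> z0 h1 h2 h3.
case: z z0 h1 h2 => [z'| |] // z0 h1 h2.
case: y h1 => [y'| |] h1.
- move: (le_trans h3 h1); rewrite -EFinD !lee_fin; move: h2; rewrite lee_fin; lra.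
- exact: leey.
- by move: (le_trans h3 h1).
Qed.
End ehelp7.

Section main7.
Context {d : measure_display} {T : measurableType d} {R : realType}.
Variables (mu : {measure set T -> \bar R}) (P : set T -> \bar R).
Hypothesis P0 : forall E, measurable E -> (0 <= P E)%E.
Local Open Scope ereal_scope.

Lemma upper M (Om : nat -> set T) Omega (E : 'I_M -> set T) :
  (forall k, measurable (Om k)) -> (0 < M)%N -> P3 P -> P4 mu P ->
  measurable Omega -> P Omega < +oo -> (fun k => P (Om k)) @ \oo --> P Omega ->
  L1_conv mu Om Omega -> cluster_in mu P E Omega ->
  forall eta : R, (0 < eta)%R ->
  ev (fun k => cheeger mu P M (Om k) <= (cval mu P E + eta)%:E).
Proof.
move=> mOm M0 H3 H4 mO PO hPc hL1 HE eta eta0.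
have M0' : (0 < M%:R :> R)%R by rewrite ltr0n.
have eta'0 : (0 < eta / M%:R)%R by rewrite divr_gt0.
set PO' := fine (P Omega).
have POe : PO'%:E = P Omega by rewrite fineK // ge0_fin_numE // P0.
have hPc' : (fun k => P (Om k)) @ \oo --> PO'%:E by rewrite POe.
have [dl Hdl] := boolp.choice (fun i : 'I_M =>
  RatUp (ratio_ge0 P0 i HE) (let: And5 _ _ m0 _ _ := cl_facts P0 i HE in m0) eta'0).
have mE i : measurable (E i) by have [[H _] _] := HE; exact: (H i).1.
have Hev i : ev (fun k =>
   (P (E i `&` Om k) <= (fine (P (E i)) + dl i)%:E) /\
   ((fine (mu (E i)) - dl i)%:E <= mu (E i `&` Om k))).
  have [_ mEe m0 PEe p0] := cl_facts P0 i HE.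
  have dl0 := (Hdl i).1.
  have dl20 : (0 < dl i / 2)%R by rewrite divr_gt0.
  apply: ev_and.
  - have ha := proj1 (ecvgP _ _) hPc' _ dl20.
    have hsd : mu (sd (E i `|` Omega) Omega) = 0.
      apply/eqP; rewrite eq_le measure_ge0 andbT -(proj2 HE i).
      apply: msub; [apply: sd_meas; [exact: measurableU|exact: mO]|exact: measurableD|].
      move=> x [[[Ex|Ox] nOx]|[Ox nEOx]]; [by split|by []|by exfalso; apply: nEOx; right].
    have hc : P Omega <= P (E i `|` Omega).
      have := H4 (fun _ => E i `|` Omega) Omega (fun _ => measurableU _ _ (mE i) mO) mO.
      rewrite limn_einf_cst; apply.
      apply/(L1P mu (fun _ => measurableU _ _ (mE i) mO) mO) => e e0.
      by exists 0%N => n _; rewrite hsd lee_fin ltW.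
    have hU : L1_conv mu (fun k => E i `|` Om k) (E i `|` Omega).
      apply/(L1P mu (fun k => measurableU _ _ (mE i) (mOm k)) (measurableU _ _ (mE i) mO))
        => e e0.
      apply: ev_imp (proj1 (L1P mu mOm mO) hL1 e e0) => k hk; apply: le_trans hk.
      apply: msub; [apply: sd_meas; exact: measurableU|apply: sd_meas => //|].
      move=> x [[[Ex|Ox] nU]|[[Ex|Ox] nU]].
      + by exfalso; apply: nU; left.
      + by left; split => // Ox'; apply: nU; right.
      + by exfalso; apply: nU; left.
      + by right; split => // Ox'; apply: nU; right.
    have hb : ev (fun k => (PO' - dl i / 2)%:E < P (E i `|` Om k)).
      apply: LI1; apply: lt_le_trans
        (H4 _ _ (fun k => measurableU _ _ (mE i) (mOm k)) (measurableU _ _ (mE i) mO) hU).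
      apply: lt_le_trans hc; rewrite -POe lte_fin; lra.
    apply: ev_imp (ev_and ha hb) => k [[_ hk1] hk2].
    have h3 := H3 _ _ (mE i) (mOm k); rewrite -PEe in h3.
    have := elemB (P0 (measurableI _ _ (mE i) (mOm k)))
      (P0 (measurableU _ _ (mE i) (mOm k))) h3 hk1 hk2.
    by move=> h; apply: le_trans h _; rewrite lee_fin; lra.
  - apply: ev_imp (L1_r mOm mO hL1 dl0) => k hk.
    have h1 : mu (E i `\` Om k) <= (dl i)%:E.
      have ss : E i `\` Om k `<=` (E i `\` Omega) `|` (Omega `\` Om k).
        move=> x [Ex nOx]; have [Ox|nOx'] := pselect (Omega x); [right|left] => //.
      have := msub3 mu (measurableD (mE i) (mOm k)) (measurableD (mE i) mO)
        (measurableD mO (mOm k)) ss.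
      by rewrite (proj2 HE i) add0e => h; apply: le_trans h hk.
    have ss : E i `<=` (E i `&` Om k) `|` (E i `\` Om k).
      by move=> x Ex; have [Ox|nOx] := pselect (Om k x); [left|right].
    have h2 := msub3 mu (mE i) (measurableI _ _ (mE i) (mOm k)) (measurableD (mE i) (mOm k)) ss.
    apply: elemC (measure_ge0 _ _) h2 h1 _; by rewrite mEe.
apply: ev_imp (ev_fin Hev) => k Hk.
have [[HEc HEd] HEs] := HE.
have HE' : cluster_in mu P (fun i => E i `&` Om k) (Om k).
  split; first split.
  - move=> i; have [_ mEe m0 PEe p0] := cl_facts P0 i HE.
    have [h1 h2] := Hk i; have hlt := (Hdl i).2.1.
    split; first exact: measurableI.
    split; first by apply: lt_le_trans h2; rewrite lte_fin; lra.
    split; last by apply: le_lt_trans h1 (ltry _).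
    apply: le_lt_trans (proj1 (proj2 (proj2 (HEc i)))).
    by apply: msub => //; exact: measurableI.
  - move=> i j ij; apply/eqP; rewrite eq_le measure_ge0 andbT -(HEd i j ij).
    apply: msub; [apply: measurableI; exact: measurableI|exact: measurableI|].
    by move=> x [[Ex _] [Ex' _]].
  - move=> i; rewrite /subset_ae.
    have -> : (E i `&` Om k) `\` Om k = set0 by apply/seteqP; split => x // [[_ ?] ?].
    exact: measure0.
apply: le_trans (cheeger_le HE') _; rewrite lee_fin.
have hi i : (fine (P (E i `&` Om k)) / fine (mu (E i `&` Om k)) <=
    fine (P (E i)) / fine (mu (E i)) + eta / M%:R)%R.
  have [_ mEe m0 PEe p0] := cl_facts P0 i HE.
  have [_ mGe g0 PGe q0] := cl_facts P0 i HE'.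
  have [h1 h2] := Hk i.
  apply: (Hdl i).2.2.
  - rewrite divfK ?gt_eqF // -lee_fin PGe //.
  - by rewrite -lee_fin mGe.
apply: le_trans (ler_sum _ (fun i _ => hi i)) _.
rewrite big_split /= sumr_const card_ord -[X in (_ + X)%R]mulr_natr divfK ?gt_eqF //.
Qed.
End main7.

Unset Implicit Arguments. Set Strict Implicit.

Theorem proposition3p9 (d : measure_display) (T : measurableType d) (R : realType)
  (mu : {measure set T -> \bar R}) (P : set T -> \bar R)
  (hsf : sigma_finite setT mu) (hP : proper_functional P)
  (N : nat) (Om : nat -> set T)
  (hOm : forall k, measurable (Om k))
  (hadm : forall k, admissible mu P N (Om k))
  (M : nat) (hM0 : (0 < M)%N) (hMN : (M <= N)%N) :
  (* (i) *)
  (forall k l, subset_ae mu (Om k) (Om l) ->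
     (cheeger mu P M (Om l) <= cheeger mu P M (Om k))%E) /\
  (* (ii) *)
  (P6 mu P -> (fun k => mu (Om k)) @ \oo --> 0%E ->
     (fun k => cheeger mu P M (Om k)) @ \oo --> +oo%E) /\
  (* (iii) *)
  (forall Omega : set T, P4 mu P -> P5 mu P -> P6 mu P ->
     measurable Omega -> (0 < mu Omega)%E -> (mu Omega < +oo)%E ->
     L1_conv mu Om Omega ->
     (cheeger mu P M Omega <= limn_einf (fun k => cheeger mu P M (Om k)))%E /\
     (P3 P -> (P Omega < +oo)%E -> (fun k => P (Om k)) @ \oo --> P Omega ->
        (fun k => cheeger mu P M (Om k)) @ \oo --> cheeger mu P M Omega)).
Proof.
have P0 := hP.1.
split; [|split].
- by move=> k l; apply: part1 (hOm k) (hOm l).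
- by move=> H6 hmu; apply: (@part2 d T R mu P P0 M Om hOm hM0 H6 hmu).
move=> Omega H4 H5 H6 mO muO0 muOoo hL1.
have h3a := part3a P0 hOm hM0 H4 H5 H6 mO muO0 muOoo hL1.
split => // H3 PO hPc.
have hge : (0 <= cheeger mu P M Omega)%E by exact: (@cheeger_ge0 d T R mu P P0 M Omega).
move: h3a hge; case Eh: (cheeger mu P M Omega) => [r| |] h3a hge.
- apply/ecvgP => e e0; apply: ev_and.
  + have hl : ((r - e)%:E < r%:E)%E by rewrite lte_fin; lra.
    by apply: ev_imp (LI1 (lt_le_trans hl h3a)) => k /ltW.
  + have e20 : (0 < e / 2)%R by rewrite divr_gt0.
    have : (cheeger mu P M Omega < (r + e / 2)%:E)%E by rewrite Eh lte_fin; lra.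
    move=> /cheeger_lt [E [HE hEv]].
    apply: ev_imp (upper P0 hOm hM0 H3 H4 mO PO hPc hL1 HE e20) => k hk.
    apply: le_trans hk _; rewrite lee_fin; move: hEv; rewrite lte_fin; lra.
- apply/ecvgyP => A; apply: ev_imp (LI1 (lt_le_trans (ltry A) h3a)) => k.
  exact: ltW.
- by [].
Qed.
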